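(* Let $d\ge3$ and $\beta>0$. Then as $\varepsilon\to0$, \[\mathcal{B}_{\mathrm{Ising}}(\pi^*_\varepsilon,\beta,d)=\log2+\frac d2\log\frac{1+e^{-\beta}}{2}+\frac{4\varepsilon^4d\,e^{-2\beta}(e^\beta-1)^2\left(e^{2\beta}(d-2)-2de^\beta+d-2\right)}{(1+e^\beta)^2(1+e^{-\beta})^2}+O(\varepsilon^5),\] where $\pi^*_\varepsilon=\frac12(\delta_{2\varepsilon}+\delta_{-2\varepsilon})$.
   Context: For a probability measure $\pi$ on $[-1,1]$ let $(\mu_{\pi,i})_{i\ge1}$ be independent samples from $\pi$, let $\Lambda(x)=x\log x$, and \[\mathcal{B}_{\mathrm{Ising}}(\pi,\beta,d)=\mathbb{E}\left[\frac{\Lambda\left(\sum_{\sigma\in\{\pm1\}}\prod_{i=1}^d\left(1-(1-e^{-\beta})\frac{1+\sigma\mu_{\pi,i}}{2}\right)\right)}{2^{1-d}(1+e^{-\beta})^d}-\frac{d\,\Lambda\left(1-(1-e^{-\beta})\frac{1+\mu_{\pi,1}\mu_{\pi,2}}{2}\right)}{1+e^{-\beta}}\right].\] $\delta_x$ is the point mass at $x$. *)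

(* Defs.v *)
From Stdlib Require Import Reals List ZArith.
Import ListNotations.
Open Scope R_scope.

Definition Lambda (x : R) : R := x * ln x.

(* A finitely supported probability distribution on R, as a list of
   (weight, atom) pairs. *)
Definition fdist := list (R * R).

Definition is_prob_on_m11 (pi : fdist) : Prop :=
  Forall (fun p => 0 <= fst p /\ -1 <= snd p <= 1) pi /\
  fold_right Rplus 0 (map fst pi) = 1.

Definition fexpect (pi : fdist) (g : R -> R) : R :=
  fold_right Rplus 0 (map (fun p => fst p * g (snd p)) pi).

(* iidE pi n f = E[ f(mu) ] where mu_1, ..., mu_n are i.i.d. samples from pi
   (the values mu i for i = 0 or i > n are irrelevant and set to 0). *)
Fixpoint iidE (pi : fdist) (n : nat) (f : (nat -> R) -> R) : R :=
  match n with
  | O => f (fun _ => 0)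
  | S k => iidE pi k (fun mu =>
             fexpect pi (fun x => f (fun i => if Nat.eqb i (S k) then x else mu i)))
  end.

Fixpoint prodR (f : nat -> R) (n : nat) : R :=
  match n with
  | O => 1
  | S k => prodR f k * f (S k)
  end.

Definition B_Ising (pi : fdist) (beta : R) (d : nat) : R :=
  iidE pi d (fun mu =>
    Lambda (prodR (fun i => 1 - (1 - exp (- beta)) * ((1 + mu i) / 2)) d
          + prodR (fun i => 1 - (1 - exp (- beta)) * ((1 - mu i) / 2)) d)
      / (powerRZ 2 (1 - Z.of_nat d) * (1 + exp (- beta)) ^ d)
    - INR d * Lambda (1 - (1 - exp (- beta)) * ((1 + mu 1%nat * mu 2%nat) / 2))
      / (1 + exp (- beta))).

Definition pistar (eps : R) : fdist := [(1/2, 2 * eps); (1/2, - (2 * eps))].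

(* Main.v *)
Require Import Defs.
From Stdlib Require Import Reals Lra Lia List ZArith.
Import ListNotations.
Open Scope R_scope.

Definition upd (mu : nat -> R) (k : nat) (x : R) : nat -> R :=
  fun i => if Nat.eqb i k then x else mu i.

Lemma iidE_S pi k f : iidE pi (S k) f =
  iidE pi k (fun mu => fexpect pi (fun x => f (upd mu (S k) x))).
Proof. reflexivity. Qed.

Lemma fexpect_ext pi f g : (forall x, f x = g x) -> fexpect pi f = fexpect pi g.
Proof. intros H; unfold fexpect; induction pi as [|p l IH]; simpl; auto. rewrite H, IH; auto. Qed.

Lemma fexpect_add pi f g : fexpect pi (fun x => f x + g x) = fexpect pi f + fexpect pi g.
Proof. unfold fexpect; induction pi as [|p l IH]; simpl; [lra|]. rewrite IH; ring. Qed.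

Lemma fexpect_scal pi k f : fexpect pi (fun x => k * f x) = k * fexpect pi f.
Proof. unfold fexpect; induction pi as [|p l IH]; simpl; [lra|]. rewrite IH; ring. Qed.

Lemma fexpect_const pi k : fexpect pi (fun _ => k) = k * fold_right Rplus 0 (map fst pi).
Proof. unfold fexpect; induction pi as [|p l IH]; simpl; [lra|]. rewrite IH; ring. Qed.

Lemma fexpect_mono_on (Q : R -> Prop) pi f g :
  Forall (fun p => 0 <= fst p /\ Q (snd p)) pi ->
  (forall x, Q x -> f x <= g x) -> fexpect pi f <= fexpect pi g.
Proof.
  intros HF H; unfold fexpect; induction pi as [|p l IH]; simpl; [lra|].
  inversion HF; subst. destruct H2.
  apply Rplus_le_compat; auto. apply Rmult_le_compat_l; auto.
Qed.

Lemma iidE_ext pi n f g : (forall mu, f mu = g mu) -> iidE pi n f = iidE pi n g.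
Proof.
  revert f g; induction n as [|k IH]; intros f g H; simpl; auto.
  apply IH; intros mu; apply fexpect_ext; intros; apply H.
Qed.

Lemma iidE_add pi n f g : iidE pi n (fun mu => f mu + g mu) = iidE pi n f + iidE pi n g.
Proof.
  revert f g; induction n as [|k IH]; intros f g; simpl; auto.
  rewrite <- IH. apply iidE_ext; intros mu. apply fexpect_add.
Qed.

Lemma iidE_scal pi n k f : iidE pi n (fun mu => k * f mu) = k * iidE pi n f.
Proof.
  revert f; induction n as [|j IH]; intros f; simpl; auto.
  rewrite <- IH. apply iidE_ext; intros mu. apply fexpect_scal.
Qed.

Lemma iidE_const pi n k : fold_right Rplus 0 (map fst pi) = 1 -> iidE pi n (fun _ => k) = k.
Proof.
  intros H1; induction n as [|j IH]; simpl; auto.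
  transitivity (iidE pi j (fun _ => k)); [|exact IH].
  apply iidE_ext; intros mu. rewrite fexpect_const, H1; ring.
Qed.

Lemma iidE_mono_on (Q : R -> Prop) pi n f g :
  Forall (fun p => 0 <= fst p /\ Q (snd p)) pi ->
  (forall mu, (forall i, (1 <= i <= n)%nat -> Q (mu i)) -> f mu <= g mu) ->
  iidE pi n f <= iidE pi n g.
Proof.
  intros HF; revert f g; induction n as [|k IH]; intros f g H; simpl.
  - apply H; intros; lia.
  - apply IH. intros mu Hmu. apply (fexpect_mono_on Q); auto.
    intros x Qx. apply H. intros i Hi. unfold upd.
    destruct (Nat.eqb_spec i (S k)); auto. apply Hmu; lia.
Qed.

Lemma iidE_ext_on (Q : R -> Prop) pi n f g :
  Forall (fun p => 0 <= fst p /\ Q (snd p)) pi ->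
  (forall mu, (forall i, (1 <= i <= n)%nat -> Q (mu i)) -> f mu = g mu) ->
  iidE pi n f = iidE pi n g.
Proof.
  intros HF H; apply Rle_antisym; apply (iidE_mono_on Q); auto;
  intros mu Hmu; rewrite (H mu Hmu); lra.
Qed.

Lemma Rabs_le_inv a b : Rabs a <= b -> - b <= a <= b.
Proof. unfold Rabs; destruct (Rcase_abs a); lra. Qed.

Lemma iidE_close (Q : R -> Prop) pi n f g b :
  Forall (fun p => 0 <= fst p /\ Q (snd p)) pi ->
  fold_right Rplus 0 (map fst pi) = 1 ->
  (forall mu, (forall i, (1 <= i <= n)%nat -> Q (mu i)) -> Rabs (f mu - g mu) <= b) ->
  Rabs (iidE pi n f - iidE pi n g) <= b.
Proof.
  intros HF H1 H.
  assert (A : iidE pi n f <= iidE pi n (fun mu => g mu + b)).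
  { apply (iidE_mono_on Q); auto. intros mu Hmu; specialize (H mu Hmu).
    apply Rabs_le_inv in H; lra. }
  assert (B : iidE pi n (fun mu => g mu + - b) <= iidE pi n f).
  { apply (iidE_mono_on Q); auto. intros mu Hmu; specialize (H mu Hmu).
    apply Rabs_le_inv in H; lra. }
  rewrite iidE_add, iidE_const in A, B by auto.
  apply Rabs_le; lra.
Qed.

Lemma prodR_ext_le f g n : (forall i, (1 <= i <= n)%nat -> f i = g i) -> prodR f n = prodR g n.
Proof.
  induction n as [|k IH]; intros H; simpl; auto.
  rewrite IH by (intros; apply H; lia). rewrite H by lia. reflexivity.
Qed.

Lemma prodR_mul f g n : prodR f n * prodR g n = prodR (fun i => f i * g i) n.
Proof. induction n as [|k IH]; simpl; [ring|]. rewrite <- IH; ring. Qed.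

Lemma prodR_scal k f n : prodR (fun i => k * f i) n = k ^ n * prodR f n.
Proof. induction n as [|k' IH]; simpl; [ring|]. rewrite IH; ring. Qed.

Lemma prodR_const k n : prodR (fun _ => k) n = k ^ n.
Proof. induction n as [|j IH]; simpl; [ring|]. rewrite IH; ring. Qed.

Lemma iidE_prod pi n (h : nat -> R -> R) :
  iidE pi n (fun mu => prodR (fun i => h i (mu i)) n) = prodR (fun i => fexpect pi (h i)) n.
Proof.
  induction n as [|k IH]; simpl; auto.
  rewrite Rmult_comm, <- IH. rewrite <- (iidE_scal pi k (fexpect pi (h (S k)))).
  apply iidE_ext; intros mu.
  rewrite Rmult_comm, <- fexpect_scal. apply fexpect_ext; intros x.
  rewrite (prodR_ext_le _ (fun i => h i (mu i))).
  - unfold upd; rewrite Nat.eqb_refl; reflexivity.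
  - intros i Hi; unfold upd. destruct (Nat.eqb_spec i (S k)); [lia|auto].
Qed.
Lemma abs_comb x y z a b c : Rabs x <= a -> Rabs y <= b -> Rabs z <= c -> Rabs (x + y*z) <= a + b*c.
Proof.
  intros H1 H2 H3. eapply Rle_trans; [apply Rabs_triang|]. rewrite Rabs_mult.
  apply Rplus_le_compat; auto. apply Rmult_le_compat; auto using Rabs_pos.
Qed.

Lemma T_lemma n : exists K, 0 <= K /\ forall (a : nat -> R) r, 0 <= r <= 1 ->
  (forall i, (1 <= i <= n)%nat -> Rabs (a i) <= r) ->
  Rabs ((prodR (fun i => 1 + a i) n + prodR (fun i => 1 - a i) n)/2 - 1) <= K * r^2 /\
  Rabs ((prodR (fun i => 1 + a i) n - prodR (fun i => 1 - a i) n)/2) <= K * r.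
Proof.
  induction n as [|k IH].
  - exists 0; split; [lra|]; intros a r Hr Ha; simpl.
    replace ((1+1)/2-1) with 0 by field. replace ((1-1)/2) with 0 by field.
    rewrite Rabs_R0; lra.
  - destruct IH as [K [K0 HK]]. exists (2*K+1); split; [lra|].
    intros a r Hr Ha. destruct (HK a r Hr) as [H1 H2]; [intros; apply Ha; lia|].
    assert (Hb : Rabs (a (S k)) <= r) by (apply Ha; lia).
    simpl. set (P := prodR (fun i => 1 + a i) k) in *. set (M := prodR (fun i => 1 - a i) k) in *.
    set (b := a (S k)) in *. split.
    + replace ((P * (1 + b) + M * (1 - b)) / 2 - 1) with (((P+M)/2 - 1) + b * ((P - M)/2)) by field.
      eapply Rle_trans; [apply (abs_comb _ _ _ _ _ _ H1 Hb H2)|]. nra.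
    + replace ((P * (1 + b) - M * (1 - b)) / 2) with (((P-M)/2 + b) + b * ((P + M)/2 - 1)) by field.
      assert (H3 : Rabs ((P - M) / 2 + b) <= K * r + r).
      { eapply Rle_trans; [apply Rabs_triang|]; lra. }
      eapply Rle_trans; [apply (abs_comb _ _ _ _ _ _ H3 Hb H1)|].
      assert (r^2 <= 1) by (simpl; nra).
      assert (K * r^2 <= K) by nra.
      assert (r * (K * r^2) <= r * K) by nra. nra.
Qed.

Lemma e_lemma n : exists K, 0 <= K /\ forall u, Rabs u <= 1 ->
  Rabs (((1+u)^n + (1-u)^n)/2 - 1 - INR n * (INR n - 1)/2 * u^2) <= K * Rabs u ^ 3 /\
  Rabs (((1+u)^n - (1-u)^n)/2 - INR n * u) <= K * Rabs u ^ 2 /\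
  Rabs (((1+u)^n + (1-u)^n)/2 - 1) <= K * Rabs u.
Proof.
  induction n as [|k IH].
  - exists 0; split; [lra|]; intros u Hu; simpl.
    replace ((1+1)/2-1-0*(0-1)/2*(u*(u*1))) with 0 by field.
    replace ((1-1)/2-0*u) with 0 by field. replace ((1+1)/2-1) with 0 by field.
    rewrite Rabs_R0; lra.
  - destruct IH as [K [K0 HK]]. exists (2*K + INR k); split.
    { pose proof (pos_INR k); lra. }
    intros u Hu. destruct (HK u Hu) as [H1 [H2 H3]].
    assert (Hu0 := Rabs_pos u).
    rewrite S_INR. simpl pow.
    set (P := (1+u)^k) in *. set (M := (1-u)^k) in *.
    assert (Hk := pos_INR k). set (m := INR k) in *.
    assert (Hu' : Rabs u <= Rabs u) by lra.
    split; [|split].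
    + replace ((1 + u) * P + (1 - u) * M) with (P + M + u * (P - M)) by ring.
      replace ((P + M + u * (P - M)) / 2 - 1 - (m + 1) * (m + 1 - 1) / 2 * (u * (u * 1)))
        with ((((P+M)/2 - 1 - m*(m-1)/2*u^2)) + u * ((P-M)/2 - m*u)) by (simpl; field).
      eapply Rle_trans; [apply (abs_comb _ _ _ _ _ _ H1 Hu' H2)|].
      assert (0 <= m * Rabs u ^ 3) by (apply Rmult_le_pos; [lra| apply pow_le; lra]).
      simpl in *. lra.
    + replace ((((1 + u) * P - (1 - u) * M) / 2 - (m + 1) * u))
        with (((P-M)/2 - m*u) + u * ((P+M)/2 - 1)) by field.
      eapply Rle_trans; [apply (abs_comb _ _ _ _ _ _ H2 Hu' H3)|]. simpl. nra.
    + replace (((1 + u) * P + (1 - u) * M) / 2 - 1)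
        with (((P+M)/2 - 1) + u * (((P-M)/2 - m*u) + m * u)) by field.
      assert (H4 : Rabs ((P - M) / 2 - m * u + m * u) <= K * Rabs u ^ 2 + m * Rabs u).
      { eapply Rle_trans; [apply Rabs_triang|]. rewrite Rabs_mult, (Rabs_right m) by lra. lra. }
      eapply Rle_trans; [apply (abs_comb _ _ _ _ _ _ H3 Hu' H4)|]. simpl.
      assert (Hv2 : Rabs u * Rabs u <= Rabs u) by nra.
      assert (Hv3 : Rabs u * (Rabs u * Rabs u) <= Rabs u) by nra.
      assert (K * (Rabs u * (Rabs u * Rabs u)) <= K * Rabs u) by (apply Rmult_le_compat_l; lra).
      assert (m * (Rabs u * Rabs u) <= m * Rabs u) by (apply Rmult_le_compat_l; lra).
      simpl. nra.
Qed.
From Coquelicot Require Coquelicot.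
Module PhiM.
Import Coquelicot.Coquelicot.
Lemma ln_le_xm1 y : 0 < y -> ln y <= y - 1.
Proof.
  intros Hy. destruct (Req_dec (ln y) 0) as [E|E].
  - rewrite E. assert (y = 1). { rewrite <- (exp_ln y Hy), E, exp_0; auto. } lra.
  - pose proof (exp_ineq1 _ E). rewrite exp_ln in H by auto. lra.
Qed.

Lemma ln_bounds s : -1/2 <= s <= 1/2 -> 0 <= s - ln (1+s) <= 2 * s^2.
Proof.
  intros Hs. pose proof (ln_le_xm1 (1+s)) as A.
  pose proof (ln_le_xm1 (/(1+s))) as B. rewrite ln_Rinv in B by lra.
  assert (0 < /(1+s)) by (apply Rinv_0_lt_compat; lra).
  specialize (A ltac:(lra)); specialize (B H).
  assert (E : /(1+s) - 1 = - s / (1+s)) by (field; lra).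
  assert (F : s - s/(1+s) = s^2/(1+s)) by (field; lra).
  assert (G : s^2/(1+s) <= 2 * s^2).
  { apply (Rmult_le_reg_r (1+s)); [lra|]. unfold Rdiv; rewrite Rmult_assoc, Rinv_l by lra.
    simpl; nra. }
  unfold Rdiv in *. split; nra.
Qed.

Lemma phi_bound t : Rabs t <= 1/2 ->
  Rabs ((1+t) * ln (1+t) - t - t^2/2) <= 2 * Rabs t ^ 3.
Proof.
  intros Ht. assert (Ht' : -1/2 <= t <= 1/2) by (unfold Rabs in Ht; destruct (Rcase_abs t); lra).
  set (g := fun s => (1+s) * ln (1+s) - s - s^2/2).
  assert (Hd : forall s, -1/2 <= s <= 1/2 -> is_derive g s (ln (1+s) - s)).
  { intros s Hs. unfold g. auto_derive; [lra|]. field. lra. }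
  destruct (MVT_gen g 0 t (fun s => ln (1+s) - s)) as [c [Hc Hgc]].
  - intros s Hs. apply Hd. pose proof (Rmin_l 0 t); pose proof (Rmin_r 0 t);
    pose proof (Rmax_l 0 t); pose proof (Rmax_r 0 t).
    unfold Rmin, Rmax in *; destruct (Rle_dec 0 t); lra.
  - intros s Hs. apply derivable_continuous_pt. exists (ln (1+s) - s).
    apply is_derive_Reals. apply Hd. pose proof (Rmin_l 0 t); pose proof (Rmin_r 0 t);
    pose proof (Rmax_l 0 t); pose proof (Rmax_r 0 t).
    unfold Rmin, Rmax in *; destruct (Rle_dec 0 t); lra.
  - assert (Hc' : Rabs c <= Rabs t).
    { unfold Rmin, Rmax in Hc; destruct (Rle_dec 0 t); unfold Rabs;
      destruct (Rcase_abs c); destruct (Rcase_abs t); lra. }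
    assert (Hc2 : -1/2 <= c <= 1/2) by (unfold Rabs in *; destruct (Rcase_abs c); destruct (Rcase_abs t); lra).
    assert (g0 : g 0 = 0). { unfold g. cbv beta. rewrite Rplus_0_r, ln_1. lra. }
    change ((1+t) * ln (1+t) - t - t^2/2) with (g t).
    replace (g t) with (g t - g 0) by lra. rewrite Hgc, Rminus_0_r, Rabs_mult.
    pose proof (ln_bounds c Hc2).
    assert (Rabs (ln (1 + c) - c) <= 2 * c^2).
    { rewrite Rabs_left1 by lra. lra. }
    assert (c^2 <= Rabs t ^ 2).
    { rewrite <- (pow2_abs c). apply pow_incr; split; auto using Rabs_pos. }
    pose proof (Rabs_pos t).
    apply Rle_trans with (2 * Rabs t ^ 2 * Rabs t).
    + apply Rmult_le_compat_r; auto. lra.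
    + simpl; lra.
Qed.

End PhiM.
Import PhiM.

Definition cc beta := (1 - exp (- beta)) / (1 + exp (- beta)).
Definition hh beta := (1 + exp (- beta)) / 2.
Definition Pp beta d (mu : nat -> R) := prodR (fun i => 1 + cc beta * mu i) d.
Definition Pm beta d (mu : nat -> R) := prodR (fun i => 1 - cc beta * mu i) d.
Definition Tf beta d mu := (Pp beta d mu + Pm beta d mu) / 2 - 1.
Definition wf beta (mu : nat -> R) := cc beta * (mu 1%nat * mu 2%nat).

Lemma powerRZ_2 d : powerRZ 2 (1 - Z.of_nat d) = 2 / 2 ^ d.
Proof.
  assert (P : powerRZ 2 (1 - Z.of_nat d) * 2^d = 2).
  { rewrite pow_powerRZ, <- powerRZ_add by lra.
    replace (1 - Z.of_nat d + Z.of_nat d)%Z with 1%Z by ring. simpl; ring. }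
  assert (2^d <> 0) by (apply pow_nonzero; lra).
  apply (Rmult_eq_reg_r (2^d)); auto. rewrite P. field; auto.
Qed.

Lemma integrand_pt d beta (mu : nat -> R) :
  -1 < Tf beta d mu -> wf beta mu < 1 ->
  Lambda (prodR (fun i => 1 - (1 - exp (- beta)) * ((1 + mu i) / 2)) d
          + prodR (fun i => 1 - (1 - exp (- beta)) * ((1 - mu i) / 2)) d)
      / (powerRZ 2 (1 - Z.of_nat d) * (1 + exp (- beta)) ^ d)
    - INR d * Lambda (1 - (1 - exp (- beta)) * ((1 + mu 1%nat * mu 2%nat) / 2))
      / (1 + exp (- beta))
  = (1 + Tf beta d mu) * (INR d * ln (hh beta) + ln 2 + ln (1 + Tf beta d mu))
    - INR d / 2 * ((1 - wf beta mu) * (ln (hh beta) + ln (1 - wf beta mu))).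
Proof.
  intros HT Hw.
  assert (Hq : 0 < exp (- beta)) by apply exp_pos.
  rewrite (prodR_ext_le (fun i => 1 - (1 - exp (- beta)) * ((1 + mu i) / 2))
             (fun i => hh beta * (1 - cc beta * mu i))).
  2:{ intros; unfold hh, cc; field; lra. }
  rewrite (prodR_ext_le (fun i => 1 - (1 - exp (- beta)) * ((1 - mu i) / 2))
             (fun i => hh beta * (1 + cc beta * mu i))).
  2:{ intros; unfold hh, cc; field; lra. }
  rewrite !prodR_scal.
  fold (Pm beta d mu) (Pp beta d mu).
  replace (hh beta ^ d * Pm beta d mu + hh beta ^ d * Pp beta d mu)
    with (hh beta ^ d * (2 * (1 + Tf beta d mu))) by (unfold Tf; field).
  replace (1 - (1 - exp (- beta)) * ((1 + mu 1%nat * mu 2%nat) / 2))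
    with (hh beta * (1 - wf beta mu)) by (unfold hh, wf, cc; field; lra).
  assert (Hh : 0 < hh beta) by (unfold hh; lra).
  unfold Lambda.
  rewrite ln_mult, ln_pow, ln_mult, ln_mult; try lra;
    try (apply pow_lt; lra); try (apply Rmult_lt_0_compat; lra).
  rewrite powerRZ_2.
  assert (E : hh beta ^ d = (1 + exp (- beta)) ^ d / 2 ^ d).
  { unfold hh, Rdiv. rewrite Rpow_mult_distr, pow_inv. reflexivity. }
  rewrite E.
  assert (2^d <> 0) by (apply pow_nonzero; lra).
  assert ((1 + exp (- beta))^d <> 0) by (apply pow_nonzero; lra).
  unfold hh. field. repeat split; auto; lra.
Qed.

Lemma prodR_W (mu : nat -> R) n : (2 <= n)%nat ->
  prodR (fun i => if (i <=? 2)%nat then mu i else 1) n = mu 1%nat * mu 2%nat.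
Proof.
  intros H. induction n as [|k IH]; [lia|].
  destruct (Nat.eq_dec k 1) as [->|Hk]; [simpl; ring|].
  change (prodR (fun i => if (i <=? 2)%nat then mu i else 1) k *
          (if (S k <=? 2)%nat then mu (S k) else 1) = mu 1%nat * mu 2%nat).
  rewrite IH by lia.
  replace (S k <=? 2)%nat with false by (symmetry; apply Nat.leb_gt; lia). ring.
Qed.

Lemma prodR_zero f n : f 1%nat = 0 -> (1 <= n)%nat -> prodR f n = 0.
Proof.
  intros H Hn. induction n as [|k IH]; [lia|].
  destruct k; simpl. rewrite H; ring.
  simpl in IH. rewrite IH by lia. ring.
Qed.

Lemma exp_identity beta (eps D : R) :
  4 * eps ^ 4 * D * exp (-2 * beta) * (exp beta - 1) ^ 2
    * (exp (2 * beta) * (D - 2) - 2 * D * exp beta + D - 2)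
    / ((1 + exp beta) ^ 2 * (1 + exp (- beta)) ^ 2)
  = D * (D - 1) / 4 * (cc beta ^ 2 * (2*eps)^2) ^ 2 - D * cc beta ^ 2 * (2*eps)^4 / 4.
Proof.
  assert (HE : 0 < exp beta) by apply exp_pos.
  assert (E1 : exp (-2 * beta) = / exp beta * / exp beta).
  { rewrite <- !exp_Ropp, <- exp_plus. f_equal; ring. }
  assert (E2 : exp (2 * beta) = exp beta * exp beta).
  { rewrite <- exp_plus. f_equal; ring. }
  rewrite E1, E2. unfold cc. rewrite exp_Ropp.
  assert (0 < / exp beta) by (apply Rinv_0_lt_compat; lra).
  field; repeat split; lra.
Qed.

Theorem lemma5p2 (d : nat) (beta : R) :
  (3 <= d)%nat -> 0 < beta ->
  exists C delta : R, 0 < delta /\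
    forall eps : R, 0 < Rabs eps < delta ->
      Rabs (B_Ising (pistar eps) beta d
            - (ln 2 + INR d / 2 * ln ((1 + exp (- beta)) / 2)
               + 4 * eps ^ 4 * INR d * exp (-2 * beta) * (exp beta - 1) ^ 2
                 * (exp (2 * beta) * (INR d - 2) - 2 * INR d * exp beta + INR d - 2)
                 / ((1 + exp beta) ^ 2 * (1 + exp (- beta)) ^ 2)))
      <= C * Rabs eps ^ 5.
Proof.
  intros Hd Hb.
  assert (Hq : 0 < exp (- beta)) by apply exp_pos.
  assert (Hq1 : exp (- beta) < 1).
  { rewrite <- exp_0. apply exp_increasing. lra. }
  assert (Hc : Rabs (cc beta) <= 1).
  { unfold cc. apply Rabs_le. split; apply (Rmult_le_reg_r (1 + exp (- beta))); try lra;
    unfold Rdiv; rewrite Rmult_assoc, Rinv_l by lra; lra. }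
  assert (Hc2 : cc beta ^ 2 <= 1).
  { rewrite <- (pow2_abs (cc beta)). pose proof (Rabs_pos (cc beta)). simpl; nra. }
  set (Dd := INR d).
  assert (HDd : 0 <= Dd) by apply pos_INR.
  destruct (T_lemma d) as [K1 [K10 HK1]].
  destruct (e_lemma d) as [K2 [K20 HK2]].
  exists (64 * (2 * K1 ^ 3 + Dd + K2)), (1 / (4 * (K1 + 1))).
  split. { apply Rdiv_lt_0_compat; lra. }
  intros eps [He0 He].
  set (x := 2 * eps).
  assert (Hx : Rabs x = 2 * Rabs eps).
  { unfold x. rewrite Rabs_mult, Rabs_right by lra. reflexivity. }
  assert (Hxd : Rabs x * (2 * (K1 + 1)) < 1).
  { rewrite Hx. apply (Rmult_lt_compat_r (4 * (K1+1))) in He; [|lra].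
    unfold Rdiv in He. rewrite Rmult_assoc, Rinv_l in He by lra. lra. }
  assert (Hx2 : Rabs x <= 1/2) by nra.
  assert (Hxx : x ^ 2 = Rabs x * Rabs x) by (rewrite <- pow2_abs; simpl; ring).
  assert (HK1x : K1 * x^2 <= 1/2).
  { rewrite Hxx. pose proof (Rabs_pos x). nra. }
  assert (Hx6 : x ^ 6 <= 64 * Rabs eps ^ 5).
  { replace (x^6) with (Rabs x ^ 6) by (rewrite RPow_abs; unfold Rabs; destruct (Rcase_abs (x^6)); try lra;
        pose proof (pow2_ge_0 (x^3)); replace (x^6) with ((x^3)^2) in * by ring; lra).
    rewrite Hx. assert (Rabs eps <= 1) by (pose proof (Rabs_pos eps); 
      assert (1 / (4 * (K1 + 1)) <= 1) by (apply Rmult_le_reg_r with (4*(K1+1)); [lra|];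
        unfold Rdiv; rewrite Rmult_assoc, Rinv_l by lra; lra); lra).
    replace ((2 * Rabs eps) ^ 6) with (64 * (Rabs eps ^ 5 * Rabs eps)) by ring.
    pose proof (pow_le (Rabs eps) 5 (Rabs_pos eps)). nra. }
  set (Q := fun y => y = x \/ y = - x).
  assert (HF : Forall (fun p => 0 <= fst p /\ Q (snd p)) (pistar eps)).
  { unfold pistar, Q. apply Forall_cons; [|apply Forall_cons; [|apply Forall_nil]]; simpl;
    split; try lra; [left|right]; reflexivity. }
  assert (HW : fold_right Rplus 0 (map fst (pistar eps)) = 1) by (simpl; lra).

  set (L := ln (hh beta)).
  set (M := fun mu => (1 + Tf beta d mu) * (Dd * L + ln 2) + Tf beta d mu + Tf beta d mu ^ 2 / 2
            - Dd / 2 * ((1 - wf beta mu) * L - wf beta mu + wf beta mu ^ 2 / 2)).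
  assert (Hsupp : forall mu, (forall i, (1 <= i <= d)%nat -> Q (mu i)) ->
            forall i, (1 <= i <= d)%nat -> Rabs (mu i) = Rabs x /\ mu i ^ 2 = x ^ 2).
  { intros mu Hmu i Hi. destruct (Hmu i Hi) as [-> | ->]; split;
      [reflexivity | reflexivity | apply Rabs_Ropp | ring]. }
  assert (HT : forall mu, (forall i, (1 <= i <= d)%nat -> Q (mu i)) ->
            Rabs (Tf beta d mu) <= K1 * x ^ 2).
  { intros mu Hmu. destruct (HK1 (fun i => cc beta * mu i) (Rabs x)) as [H1 _].
    - split; [apply Rabs_pos| lra].
    - intros i Hi. rewrite Rabs_mult, (proj1 (Hsupp mu Hmu i Hi)).
      pose proof (Rabs_pos x). pose proof (Rabs_pos (cc beta)). nra.
    - rewrite <- (pow2_abs x). exact H1. }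
  assert (Hw : forall mu, (forall i, (1 <= i <= d)%nat -> Q (mu i)) ->
            Rabs (wf beta mu) <= x ^ 2 /\ wf beta mu ^ 2 = cc beta ^ 2 * x ^ 4).
  { intros mu Hmu. unfold wf.
    destruct (Hsupp mu Hmu 1%nat ltac:(lia)) as [A1 B1].
    destruct (Hsupp mu Hmu 2%nat ltac:(lia)) as [A2 B2]. split.
    - rewrite !Rabs_mult, A1, A2, Hxx. pose proof (Rabs_pos x). pose proof (Rabs_pos (cc beta)).
      assert (0 <= Rabs x * Rabs x) by nra. nra.
    - replace ((cc beta * (mu 1%nat * mu 2%nat)) ^ 2) with (cc beta ^ 2 * (mu 1%nat ^ 2 * mu 2%nat ^ 2)) by ring.
      rewrite B1, B2. ring. }
  assert (Hclose : Rabs (B_Ising (pistar eps) beta d - iidE (pistar eps) d M) <= (2 * K1^3 + Dd) * x^6).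
  { unfold B_Ising. apply (iidE_close Q); auto. intros mu Hmu.
    pose proof (HT mu Hmu) as HT'; destruct (Hw mu Hmu) as [Hw1 Hw2].
    assert (HTs : Rabs (Tf beta d mu) <= 1/2) by lra.
    assert (Hws : Rabs (wf beta mu) <= 1/2) by (pose proof (Rabs_pos x); nra).
    pose proof (Rabs_le_inv _ _ HTs). pose proof (Rabs_le_inv _ _ Hws).
    rewrite integrand_pt by lra.
    unfold M. fold Dd L.
    set (T := Tf beta d mu) in *. set (w := wf beta mu) in *.
    replace (1 - w) with (1 + - w) by ring.
    replace ((1 + T) * (Dd * L + ln 2 + ln (1 + T)) - Dd / 2 * ((1 + - w) * (L + ln (1 + - w))) -
      ((1 + T) * (Dd * L + ln 2) + T + T ^ 2 / 2 - Dd / 2 * ((1 + - w) * L - w + w ^ 2 / 2)))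
      with (((1 + T) * ln (1 + T) - T - T^2/2) + (- (Dd/2)) * ((1 + - w) * ln (1 + - w) - (- w) - (- w)^2/2)) by field.
    assert (Hwa : Rabs (- w) <= 1/2) by (rewrite Rabs_Ropp; lra).
    pose proof (phi_bound T HTs) as P1. pose proof (phi_bound (- w) Hwa) as P2.
    rewrite Rabs_Ropp in P2.
    assert (Hd2 : Rabs (- (Dd/2)) <= Dd/2) by (rewrite Rabs_Ropp, Rabs_right; lra).
    eapply Rle_trans; [apply (abs_comb _ _ _ _ _ _ P1 Hd2 P2)|].
    assert (T3 : Rabs T ^ 3 <= (K1 * x^2) ^ 3) by (apply pow_incr; split; [apply Rabs_pos|lra]).
    assert (W3 : Rabs w ^ 3 <= (x^2) ^ 3) by (apply pow_incr; split; [apply Rabs_pos|lra]).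
    replace ((K1 * x^2)^3) with (K1^3 * x^6) in T3 by ring.
    replace ((x^2)^3) with (x^6) in W3 by ring.
    nra. }

  set (c := cc beta) in *.
  set (u := c ^ 2 * x ^ 2).
  assert (EPp : iidE (pistar eps) d (fun mu => prodR (fun i => 1 + c * mu i) d) = 1).
  { transitivity (prodR (fun i => fexpect (pistar eps) (fun y => 1 + c * y)) d).
    - apply (iidE_prod (pistar eps) d (fun _ y => 1 + c * y)).
    - rewrite (prodR_ext_le _ (fun _ => 1)), prodR_const, pow1; auto.
      intros; unfold fexpect, pistar; simpl; field. }
  assert (EPm : iidE (pistar eps) d (fun mu => prodR (fun i => 1 - c * mu i) d) = 1).
  { transitivity (prodR (fun i => fexpect (pistar eps) (fun y => 1 - c * y)) d).
    - apply (iidE_prod (pistar eps) d (fun _ y => 1 - c * y)).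
    - rewrite (prodR_ext_le _ (fun _ => 1)), prodR_const, pow1; auto.
      intros; unfold fexpect, pistar; simpl; field. }
  assert (EPp2 : iidE (pistar eps) d (fun mu => prodR (fun i => (1 + c * mu i) * (1 + c * mu i)) d) = (1 + u) ^ d).
  { transitivity (prodR (fun i => fexpect (pistar eps) (fun y => (1 + c * y) * (1 + c * y))) d).
    - apply (iidE_prod (pistar eps) d (fun _ y => (1 + c * y) * (1 + c * y))).
    - rewrite (prodR_ext_le _ (fun _ => 1 + u)), prodR_const; auto.
      intros; unfold fexpect, pistar, u, x; simpl; field. }
  assert (EPm2 : iidE (pistar eps) d (fun mu => prodR (fun i => (1 - c * mu i) * (1 - c * mu i)) d) = (1 + u) ^ d).
  { transitivity (prodR (fun i => fexpect (pistar eps) (fun y => (1 - c * y) * (1 - c * y))) d).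
    - apply (iidE_prod (pistar eps) d (fun _ y => (1 - c * y) * (1 - c * y))).
    - rewrite (prodR_ext_le _ (fun _ => 1 + u)), prodR_const; auto.
      intros; unfold fexpect, pistar, u, x; simpl; field. }
  assert (EPpm : iidE (pistar eps) d (fun mu => prodR (fun i => (1 + c * mu i) * (1 - c * mu i)) d) = (1 - u) ^ d).
  { transitivity (prodR (fun i => fexpect (pistar eps) (fun y => (1 + c * y) * (1 - c * y))) d).
    - apply (iidE_prod (pistar eps) d (fun _ y => (1 + c * y) * (1 - c * y))).
    - rewrite (prodR_ext_le _ (fun _ => 1 - u)), prodR_const; auto.
      intros; unfold fexpect, pistar, u, x; simpl; field. }
  assert (EW : iidE (pistar eps) d (fun mu => prodR (fun i => if (i <=? 2)%nat then mu i else 1) d) = 0).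
  { transitivity (prodR (fun i => fexpect (pistar eps) (fun y => if (i <=? 2)%nat then y else 1)) d).
    - apply (iidE_prod (pistar eps) d (fun i y => if (i <=? 2)%nat then y else 1)).
    - apply prodR_zero; [|lia]. unfold fexpect, pistar; simpl; field. }
  assert (HEM : iidE (pistar eps) d M
     = ln 2 + Dd * L / 2 + (((1 + u) ^ d + (1 - u) ^ d) / 2 - 1) / 2 - Dd * c ^ 2 * x ^ 4 / 4).
  { rewrite (iidE_ext_on Q _ _ M (fun mu =>
        (- 1 / 2 - Dd * L / 2 - Dd * c ^ 2 * x ^ 4 / 4)
        + (Dd * L + ln 2) / 2 * prodR (fun i => 1 + c * mu i) d
        + (Dd * L + ln 2) / 2 * prodR (fun i => 1 - c * mu i) d
        + 1 / 8 * prodR (fun i => (1 + c * mu i) * (1 + c * mu i)) d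
        + 1 / 8 * prodR (fun i => (1 - c * mu i) * (1 - c * mu i)) d
        + 1 / 4 * prodR (fun i => (1 + c * mu i) * (1 - c * mu i)) d
        + Dd * (L + 1) / 2 * c * prodR (fun i => if (i <=? 2)%nat then mu i else 1) d)); auto.
    2:{ intros mu Hmu. unfold M. destruct (Hw mu Hmu) as [_ Hw2]. rewrite Hw2.
        rewrite prodR_W by lia.
        assert (E1 : prodR (fun i => (1 + c * mu i) * (1 + c * mu i)) d = Pp beta d mu * Pp beta d mu)
          by (unfold Pp; rewrite prodR_mul; reflexivity).
        assert (E2 : prodR (fun i => (1 - c * mu i) * (1 - c * mu i)) d = Pm beta d mu * Pm beta d mu)
          by (unfold Pm; rewrite prodR_mul; reflexivity).
        assert (E3 : prodR (fun i => (1 + c * mu i) * (1 - c * mu i)) d = Pp beta d mu * Pm beta d mu)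
          by (unfold Pp, Pm; rewrite prodR_mul; reflexivity).
        rewrite E1, E2, E3. fold (Pp beta d mu) (Pm beta d mu).
        change (prodR (fun i => 1 + c * mu i) d) with (Pp beta d mu).
        change (prodR (fun i => 1 - c * mu i) d) with (Pm beta d mu).
        unfold Tf, wf. fold c. field. }
    rewrite !iidE_add, !iidE_scal, iidE_const by auto.
    rewrite EPp, EPm, EPp2, EPm2, EPpm, EW. field. }

  rewrite exp_identity. change (2 * eps) with x. fold c.
  change (ln ((1 + exp (- beta)) / 2)) with L.
  set (B := B_Ising (pistar eps) beta d) in *.
  set (EM := iidE (pistar eps) d M) in *.
  assert (Hu0 : 0 <= u) by (unfold u; apply Rmult_le_pos; apply pow2_ge_0).
  assert (Hux : u <= x ^ 2) by (unfold u; pose proof (pow2_ge_0 x); nra).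
  assert (Hu1 : Rabs u <= 1) by (rewrite Rabs_right by lra; rewrite Hxx in Hux; nra).
  destruct (HK2 u Hu1) as [He2 _]. fold Dd in He2. fold u.
  replace (B - (ln 2 + Dd / 2 * L + (Dd * (Dd - 1) / 4 * u ^ 2 - Dd * c ^ 2 * x ^ 4 / 4)))
    with ((B - EM) + (1/2) * (((1 + u) ^ d + (1 - u) ^ d) / 2 - 1 - Dd * (Dd - 1) / 2 * u ^ 2)).
  2:{ rewrite HEM. fold Dd. unfold u. field. }
  assert (Hh : Rabs (1/2) <= 1/2) by (rewrite Rabs_right; lra).
  eapply Rle_trans; [apply (abs_comb _ _ _ _ _ _ Hclose Hh He2)|].
  assert (U3 : Rabs u ^ 3 <= x ^ 6).
  { rewrite Rabs_right by lra. replace (x^6) with ((x^2)^3) by ring. apply pow_incr; lra. }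
  assert (0 <= x ^ 6) by (replace (x^6) with ((x^3)^2) by ring; apply pow2_ge_0).
  assert (K2 * Rabs u ^ 3 <= K2 * x ^ 6) by (apply Rmult_le_compat_l; lra).
  assert (0 <= K1 ^ 3) by (apply pow_le; lra).
  apply Rle_trans with ((2 * K1 ^ 3 + Dd + K2) * x ^ 6); [nra|].
  replace (64 * (2 * K1 ^ 3 + Dd + K2) * Rabs eps ^ 5) with ((2 * K1 ^ 3 + Dd + K2) * (64 * Rabs eps ^ 5)) by ring.
  apply Rmult_le_compat_l; lra.
Qed.
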